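(* Let $q,W$ be positive integers and $a,b,h$ integers with $\gcd(W,b)=\gcd(q,a)=1$. Then $|R^\ast_{W,b}(q,a,h)|\le\gcd(h,q)$.
   Context: $e(z)=e^{2\pi iz}$. $R^\ast_{W,b}(q,a,h)=\sum_{1\le c\le qW,\ \gcd(c,q)=1,\ c\equiv b\ (\mathrm{mod}\ W)}e\big(\frac{ach}{qW}\big)$. Here $\gcd(0,q)=q$. *)

(* Defs.v *)
From mathcomp Require Import all_boot all_algebra.
From mathcomp Require Import all_classical all_reals all_analysis.
From mathcomp Require Import complex.
Import GRing.Theory Num.Theory ComplexField.
Local Open Scope ring_scope.

Definition e_ {R : realType} (x : R) : R[i] :=
  (cos (2 * pi * x) +i* sin (2 * pi * x))%C.

Definition Rstar {R : realType} (W : nat) (b : int) (q : nat) (a h : int) : R[i] :=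
  \sum_(1 <= c < (q * W).+1 | coprime c q && (c%:Z == b %[mod W%:Z])%Z)
     e_ ((a * c%:Z * h)%:~R / (q * W)%:R : R).

(* Main.v *)
Require Import Defs.
From mathcomp Require Import all_boot all_algebra.
From mathcomp Require Import all_classical all_reals all_analysis.
From mathcomp Require Import complex.
From mathcomp Require Import ring lra zify.
Import order.Order.TTheory GRing.Theory Num.Theory ComplexField.
Local Open Scope ring_scope.
Section E.
Variable R : realType.
Lemma eD (x y : R) : e_ (x + y) = e_ x * e_ y.
Proof.
rewrite /e_ mulrDr sinD cosD /=. apply/eqP; rewrite eq_complex /= eqxx /=; apply/eqP; exact: addrC.
Qed.
Lemma e0 : e_ (0:R) = 1.
Proof. by rewrite /e_ mulr0 sin0 cos0. Qed.
Lemma e_nat (n : nat) : e_ (n%:R : R) = 1.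
Proof.
rewrite /e_.
have -> : 2 * pi * n%:R = 0 + (pi *+ 2) *+ n :> R by rewrite add0r mulr_natr mulr2n mulrDl !mul1r -mulr2n.
by rewrite !periodicn ?sin0 ?cos0 //; [exact: sinD2pi| exact: cosD2pi].
Qed.
Lemma norm_e (x : R) : `|e_ x| = 1.
Proof.
by rewrite normc_def /= cos2Dsin2 sqrtr1.
Qed.
Lemma eMn (x : R) n : e_ (x *+ n) = e_ x ^+ n.
Proof. elim: n => [|n IH]; first by rewrite mulr0n e0 expr0. by rewrite mulrS eD IH exprS. Qed.
Lemma e_int (z : int) : e_ (z%:~R : R) = 1.
Proof.
case: z => n; first by rewrite e_nat.
have h := e_nat n.+1. rewrite NegzE mulrNz.
have : e_ ((- n.+1%:R) + n.+1%:R : R) = 1 by rewrite addNr e0.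
by rewrite eD e_nat mulr1.
Qed.
Lemma e_ne1 (r N : nat) : (0 < r)%N -> (r < N)%N -> e_ (r%:R / N%:R : R) != 1.
Proof.
move=> r0 rN; set x := r%:R / N%:R : R.
have x0 : 0 < x by rewrite divr_gt0 // ltr0n // (leq_ltn_trans _ rN).
have x1 : x < 1 by rewrite ltr_pdivrMr ?mul1r ?ltr_nat // ltr0n (leq_ltn_trans _ rN).
apply/negP => /eqP/(congr1 (@complex.Re R)) /= hc.
have hpi := pi_gt0 R.
have key : forall y : R, 0 < y <= pi -> cos y < 1.
  move=> y /andP [y0 ypi]; rewrite -cos0 ltr_cos // in_itv /= ?(ltW y0) ?ypi ?lexx ?(ltW hpi) //; apply/andP; split=> //; exact: ltW.
case: (lerP (2 * pi * x) pi) => hx.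
  have h : 0 < 2 * pi * x <= pi by rewrite hx andbT mulr_gt0 // mulr_gt0.
  by have := key _ h; rewrite hc ltxx.
have h : 0 < 2 * pi * (1 - x) <= pi.
  apply/andP; split; first by rewrite mulr_gt0 // ?mulr_gt0 // subr_gt0.
  move: hx; rewrite mulrBr mulr1; lra.
have := key _ h.
have -> : 2 * pi * (1 - x) = - (2 * pi * x) + pi *+ 2 by rewrite mulrBr mulr1 addrC mulr2n mulrDl !mul1r.
by rewrite cosD2pi cosN hc ltxx.
Qed.
Lemma geo (N a : nat) : (0 < N)%N ->
  \sum_(0 <= u < N) e_ ((a * u)%:R / N%:R : R) = if (N %| a)%N then N%:R else 0.
Proof.
move=> N0; have NR : (N%:R : R) != 0 by rewrite pnatr_eq0 -lt0n.
case: ifP => [/dvdnP [k ->] | ndiv].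
  have H : forall u, e_ ((k * N * u)%:R / N%:R : R) = 1.
    by move=> u; rewrite mulnAC natrM mulfK // e_nat.
  under eq_bigr => u _ do rewrite H.
  by rewrite sumr_const_nat subn0.
set z := e_ (a%:R / N%:R : R).
have zu : forall u, e_ ((a * u)%:R / N%:R : R) = z ^+ u.
  by move=> u; rewrite -eMn natrM mulrAC mulr_natr.
under eq_bigr => u _ do rewrite zu.
have zN : z ^+ N = 1.
  by rewrite -eMn -[_ *+ N]mulr_natr divfK // e_nat.
have z1 : z != 1.
  have -> : z = e_ ((a %% N)%N%:R / N%:R) * e_ ((a %/ N)%N%:R).
    by rewrite -eD /z {1}(divn_eq a N) natrD mulrDl natrM mulfK // addrC.
  rewrite e_nat mulr1 e_ne1 // ?ltn_pmod // lt0n; apply/negP => /eqP h.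
  by move: ndiv; rewrite /dvdn h.
have := subrX1 z N; rewrite zN subrr => /esym /eqP; rewrite mulf_eq0 subr_eq0 (negbTE z1) /=.
by rewrite big_mkord => /eqP.
Qed.
Lemma split_sum (C : zmodType) (a b : nat) (g : nat -> C) :
  \sum_(0 <= k < a * b) g k = \sum_(0 <= u < b) \sum_(0 <= t < a) g (t + a * u)%N.
Proof.
elim: b => [|b IH]; first by rewrite muln0 !big_geq.
rewrite big_nat_recr //= -IH mulnS addnC (big_cat_nat _ (leq_addr _ _)) //=.
congr (_ + _); have := @big_addn _ 0 +%R 0 (a * b + a) (a * b) xpredT g; rewrite add0n addKn => ->. done.
Qed.

Lemma perA (m N a : nat) (f : nat -> R[i]) : (0 < m)%N -> (0 < N)%N ->
  (forall k, f (k + m)%N = f k) ->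
  \sum_(0 <= k < m * N) f k * e_ ((a * k)%:R / (m * N)%:R) =
  if (N %| a)%N then N%:R * \sum_(0 <= r < m) f r * e_ (((a %/ N) * r)%:R / m%:R) else 0.
Proof.
move=> m0 N0 fP.
have mR : (m%:R : R) != 0 by rewrite pnatr_eq0 -lt0n.
have NR : (N%:R : R) != 0 by rewrite pnatr_eq0 -lt0n.
have fP' : forall r u, f (r + m * u)%N = f r.
  move=> r; elim=> [|u IH]; first by rewrite muln0 addn0.
  by rewrite mulnS addnCA addnC fP IH.
rewrite split_sum.
have E : forall r u, e_ ((a * (r + m * u))%:R / (m * N)%:R : R) =
    e_ ((a * r)%:R / (m * N)%:R) * e_ ((a * u)%:R / N%:R).
  move=> r u; rewrite -eD; congr (e_ _); rewrite !natrM natrD natrM; field.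
  by rewrite mR NR.
under eq_bigr => u _ do under eq_bigr => r _ do rewrite fP' E mulrA.
under eq_bigr => u _ do rewrite -mulr_suml.
rewrite -mulr_sumr geo //.
case: ifP => [/dvdnP [k ->] | _]; last by rewrite mulr0.
rewrite mulnK // mulrC; congr (_ * _); apply: eq_bigr => r _.
congr (_ * e_ _); rewrite !natrM; field; by rewrite mR NR.
Qed.
End E.
Local Close Scope ring_scope.

Lemma root_uniq d c w t t' : coprime w d -> (t < d)%N -> (t' < d)%N ->
  (c + w * t) %% d = (c + w * t') %% d -> t = t'.
Proof.
move=> cw; wlog le : t t' / (t <= t')%N.
  move=> H td t'd E; case: (leqP t t') => h; first exact: H.
  by apply/esym/H => //; apply: ltnW.
move=> td t'd /eqP E; apply/eqP; rewrite eqn_leq le /=.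
move: E; rewrite eq_sym eqn_mod_dvd ?leq_add2l ?leq_mul2l ?le ?orbT //.
rewrite subnDl -mulnBr Gauss_dvdr; last by rewrite coprime_sym.
case: (posnP (t' - t)) => [/eqP|h]; first by rewrite subn_eq0.
move/(dvdn_leq h) => h2.
have : (t' - t < d)%N by apply: leq_ltn_trans (leq_subr _ _) t'd.
by rewrite ltnNge h2.
Qed.

Lemma root_ex d c w v : (0 < d)%N -> coprime w d ->
  exists2 t0, (t0 < d)%N & (c + w * t0) %% d = v %% d.
Proof.
move=> d0 cw.
pose f (t : 'I_d) : 'I_d := Ordinal (ltn_pmod (c + w * t) d0).
have finj : injective f.
  move=> x y /(congr1 val) /= E.
  exact: (ord_inj (@root_uniq d c w x y cw (ltn_ord x) (ltn_ord y) E)).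
case: (injF_bij finj) => g fg gf.
exists (g (Ordinal (ltn_pmod v d0))); first exact: ltn_ord.
by have := gf (Ordinal (ltn_pmod v d0)) => /(congr1 val).
Qed.

Local Open Scope ring_scope.
Lemma pick_sum (C : nzRingType) d (P : nat -> bool) (g : nat -> C) t0 : (t0 < d)%N ->
  (forall t, (t < d)%N -> P t = (t == t0)) ->
  \sum_(0 <= t < d) (P t)%:R * g t = g t0.
Proof.
move=> t0d HP.
rewrite (bigD1_seq t0) ?mem_index_iota ?iota_uniq //= HP // eqxx mul1r big1_seq ?addr0 //.
move=> i /andP [ni]; rewrite mem_index_iota => /andP [_ id].
by rewrite HP // (negbTE ni) mul0r.
Qed.

Lemma red_p (C : nzRingType) p n c w : prime p -> ~~ (p %| w)%N -> (p %| n)%N ->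
  exists k0, forall g : nat -> C,
  \sum_(0 <= k < n) (p %| c + w * k)%N%:R * g k = \sum_(0 <= u < n %/ p) g (k0 + p * u)%N.
Proof.
move=> pp npw pn.
have cwp : coprime w p by rewrite coprime_sym prime_coprime.
have p0 := prime_gt0 pp.
case: (@root_ex p c w 0 p0 cwp) => t0 t0p Ht0.
exists t0 => g.
rewrite -{1}(divnK pn) mulnC split_sum; apply: eq_bigr => u _.
apply: (@pick_sum C p (fun t => p %| c + w * (t + p * u))%N (fun t => g (t + p * u)%N) t0 t0p) => t tp.
rewrite mulnDr addnA mulnCA dvdn_addl ?dvdn_mulr // /dvdn.
rewrite mod0n in Ht0.
apply/eqP/eqP => [h|->//]; apply: (@root_uniq p c w t t0 cwp tp t0p); by rewrite h Ht0.
Qed.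

Lemma cop_per x y m : coprime (x + y * m) m = coprime x m.
Proof. by rewrite -coprime_modl addnC modnMDl coprime_modl. Qed.

Section Main.
Variable R : realType.

Definition F (n c w a : nat) : R[i] :=
  \sum_(0 <= k < n) (coprime (c + w * k) n)%:R * e_ ((a * k)%:R / n%:R).

Lemma count_np p N c w : prime p -> ~~ (p %| w)%N -> (p %| N)%N ->
  \sum_(0 <= u < N) (~~ (p %| c + w * u))%N%:R = (N - N %/ p)%N%:R :> R[i].
Proof.
move=> pp pw pN.
have -> : \sum_(0 <= u < N) (~~ (p %| c + w * u))%N%:R =
   \sum_(0 <= u < N) (1 - (p %| c + w * u)%N%:R * 1) :> R[i].
  by apply: eq_bigr => u _; case: (p %| c + w * u)%N => /=; rewrite ?mul1r ?mul0r ?subr0 ?subrr.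
case: (@red_p R[i] p N c w pp pw pN) => k0 H.
rewrite sumrB (H (fun _ => 1)).
by rewrite !sumr_const_nat !subn0 natrB ?leq_div.
Qed.

Lemma main M : forall n c w a, (n <= M)%N -> (0 < n)%N -> `|F n c w a| <= (gcdn a n)%:R.
Proof.
elim: M => [|M IH] n c w a hn n0; first by move: hn n0; case: n.
case: (ltngtP n 1) => [h|n1|->]; first by exfalso; lia.
2: by rewrite /F big_nat1 coprimen1 muln0 mul0r e0 mulr1 gcdn1 normr1.
set p := pdiv n. have pp : prime p := pdiv_prime n1. have pn : (p %| n)%N := pdiv_dvd n.
case: (pfactor_coprime pp n0) => m cpm.
move: (logn p n) => j nE.
case: j nE => [|j'] nE.
  by move: pn; rewrite nE expn0 muln1 -(negbK (p %| m)%N) -prime_coprime // cpm.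
have p1 : (1 < p)%N := prime_gt1 pp.
have p0 : (0 < p)%N := prime_gt0 pp.
set N' := (p ^ j')%N.
have N'0 : (0 < N')%N by rewrite expn_gt0 p0.
have NE : (p ^ j'.+1 = p * N')%N by rewrite expnS.
rewrite NE in nE.
have N0 : (0 < p * N')%N by rewrite muln_gt0 p0.
have m0 : (0 < m)%N by move: n0; rewrite nE muln_gt0 => /andP [].
have mM : (m <= M)%N.
  have K2 : (1 < p * N')%N by move: p1 N'0; nia.
  move: hn m0 K2 nE; nia.
have copn : forall x, coprime x n = coprime x m && ~~ (p %| x)%N.
  by move=> x; rewrite nE -NE coprimeMr (coprime_pexpr _ _ (ltn0Sn j')) (coprime_sym x p) (prime_coprime _ pp).
have mR : (m%:R : R) != 0 by rewrite pnatr_eq0 -lt0n.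
have NR : (N'%:R : R) != 0 by rewrite pnatr_eq0 -lt0n.
have pR : (p%:R : R) != 0 by rewrite pnatr_eq0 -lt0n.
rewrite /F; under eq_bigr => k _ do rewrite copn.
case: (boolP (p %| w)%N) => pw.
  case: (boolP (p %| c)%N) => pc.
    rewrite big1 ?normr0 ?ler0n // => k _.
    by rewrite (dvdn_add pc (dvdn_mulr k pw)) andbF mul0r.
  have E1 : forall k, (p %| c + w * k)%N = false.
    by move=> k; rewrite dvdn_addl ?dvdn_mulr // (negbTE pc).
  under eq_bigr => k _ do rewrite E1 andbT.
  have per : forall k, (fun k => (coprime (c + w * k) m)%:R : R[i]) (k + m)%N =
                       (fun k => (coprime (c + w * k) m)%:R) k.
    by move=> k /=; rewrite mulnDr addnA cop_per.
  have := @perA R m (p * N') a _ m0 N0 per; rewrite /= -nE => ->.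
  case: ifP => [/dvdnP [b ->] | _]; last by rewrite normr0 ler0n.
  rewrite mulnK // normrM normr_nat.
  apply: le_trans (ler_wpM2l (ler0n _ _) (IH m c w b mM m0)) _.
  by rewrite -natrM mulnC muln_gcdl -nE.
have pwm : ~~ (p %| w * m)%N by rewrite Euclid_dvdM // negb_or pw -(prime_coprime _ pp) cpm.
case: (boolP (p * N' %| a)%N) => Na.
  case/dvdnP: Na => b ab.
  have eb : forall k, e_ ((a * k)%:R / n%:R) = e_ ((b * k)%:R / m%:R) :> R[i].
    move=> k; rewrite ab nE; congr (e_ _); rewrite !natrM; field.
    by rewrite mR NR pR.
  under eq_bigr => k _ do rewrite eb.
  rewrite nE split_sum exchange_big /=.
  have T : forall t u, (coprime (c + w * (t + m * u)) m && ~~ (p %| c + w * (t + m * u))%N)%:R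
       * e_ ((b * (t + m * u))%:R / m%:R) =
      ((coprime (c + w * t) m)%:R * e_ ((b * t)%:R / m%:R)) *
       (~~ (p %| (c + w * t) + (w * m) * u))%N%:R :> R[i].
    move=> t u.
    have h1 : (c + w * (t + m * u) = (c + w * t) + (w * u) * m)%N by ring.
    have h2 : (c + w * (t + m * u) = (c + w * t) + (w * m) * u)%N by ring.
    have h3 : e_ ((b * (t + m * u))%:R / m%:R) = e_ ((b * t)%:R / m%:R) :> R[i].
      rewrite (_ : (b * (t + m * u))%:R / m%:R = (b * t)%:R / m%:R + (b * u)%:R) ?eD ?e_nat ?mulr1 //.
      rewrite mulnDr natrD !natrM; field; by rewrite mR.
    by rewrite h3 {1}h1 cop_per h2 -mulnb natrM mulrAC.
  under eq_bigr => t _ do under eq_bigr => u _ do rewrite T.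
  have Hc : forall t, \sum_(0 <= u < p * N') (~~ (p %| (c + w * t) + (w * m) * u))%N%:R
      = ((p * N') - (p * N') %/ p)%N%:R :> R[i].
    by move=> t; apply: count_np => //; apply: dvdn_mulr.
  under eq_bigr => t _ do rewrite -mulr_sumr Hc.
  rewrite -mulr_suml normrM normr_nat.
  have := IH m c w b mM m0; rewrite /F => Hb.
  apply: le_trans (ler_wpM2r (ler0n _ _) Hb) _.
  rewrite -natrM ler_nat ab -muln_gcdl.
  by apply: leq_mul (leqnn _) (leq_subr _ _).
have spl : forall x, (coprime x m && ~~ (p %| x)%N)%:R =
    (coprime x m)%:R - (p %| x)%N%:R * (coprime x m)%:R :> R[i].
  by move=> x; case: coprime; case: (p %| x)%N; rewrite ?mul1r ?mul0r ?subr0 ?subrr.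
under eq_bigr => k _ do rewrite spl mulrBl -mulrA.
rewrite sumrB.
have per : forall k, (fun k => (coprime (c + w * k) m)%:R : R[i]) (k + m)%N =
                     (fun k => (coprime (c + w * k) m)%:R) k.
  by move=> k /=; rewrite mulnDr addnA cop_per.
have := @perA R m (p * N') a _ m0 N0 per; rewrite /= -nE (negbTE Na) => ->.
rewrite sub0r normrN.
case: (@red_p R[i] p n c w pp pw pn) => k0 H.
rewrite (H (fun k => (coprime (c + w * k) m)%:R * e_ ((a * k)%:R / n%:R))).
have nP : (n %/ p = m * N')%N by rewrite nE mulnCA mulKn.
rewrite nP.
have T : forall u, (coprime (c + w * (k0 + p * u)) m)%:R * e_ ((a * (k0 + p * u))%:R / n%:R) =
   e_ ((a * k0)%:R / n%:R) * ((coprime ((c + w * k0) + (w * p) * u) m)%:R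
     * e_ ((a * u)%:R / (m * N')%:R)) :> R[i].
  move=> u; rewrite (_ : (c + w * (k0 + p * u))%N = ((c + w * k0) + (w * p) * u)%N); last by ring.
  rewrite mulrCA -eD; congr (_ * e_ _); rewrite nE mulnDr natrD !natrM; field.
  by rewrite mR NR pR.
under eq_bigr => u _ do rewrite T.
rewrite -mulr_sumr normrM norm_e mul1r.
have per2 : forall u, (fun u => (coprime ((c + w * k0) + (w * p) * u) m)%:R : R[i]) (u + m)%N =
                     (fun u => (coprime ((c + w * k0) + (w * p) * u) m)%:R) u.
  by move=> u /=; rewrite mulnDr addnA cop_per.
have := @perA R m N' a _ m0 N'0 per2; rewrite /= => ->.
case: ifP => [/dvdnP [b ab] | _]; last by rewrite normr0 ler0n.
rewrite ab mulnK // normrM normr_nat.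
apply: le_trans (ler_wpM2l (ler0n _ _) (IH m _ _ b mM m0)) _.
have cbp : coprime b p.
  rewrite coprime_sym (prime_coprime _ pp); apply/negP => pb.
  by move: Na; rewrite ab (dvdn_mul pb (dvdnn N')).
by rewrite -natrM ler_nat nE mulnA -muln_gcdl Gauss_gcdl // mulnC.
Qed.

End Main.

Theorem lemma2p11 (R : realType) (q W : nat) (a b h : int) :
  (0 < q)%N -> (0 < W)%N ->
  coprimez W%:Z b -> coprimez q%:Z a ->
  `| @Rstar R W b q a h | <= (gcdz h q%:Z)%:~R.
Proof.
move=> q0 W0 cWb cqa.
set bw := `|(b %% W%:Z)%Z|%N.
have bwE : (b %% W%:Z)%Z = bw%:Z by rewrite gez0_abs // modz_ge0 // eqz_nat -lt0n.
have bwW : (bw < W)%N.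
  have : ((b %% W%:Z)%Z < W%:Z) by apply: ltz_pmod; rewrite ltz_nat.
  by rewrite bwE ltz_nat.
have congE : forall x : nat, ((x%:Z == b %[mod W%:Z])%Z) = (x %% W == bw)%N.
  by move=> x; rewrite bwE modz_nat eqz_nat.
rewrite /Rstar big_add1 /= big_mkcond /=.
have ind : forall (bb : bool) (x : R[i]), (if bb then x else 0) = bb%:R * x.
  by case=> x; rewrite ?mul1r ?mul0r.
have ind2 : forall (b1 b2 : bool) (x : R[i]), (b1 && b2)%:R * x = b2%:R * (b1%:R * x).
  by case; case=> x; rewrite ?mul1r ?mul0r.
under eq_bigr => i _ do rewrite ind congE ind2.
rewrite mulnC split_sum.
case: (@root_ex W 1 1 bw W0 (coprime1n W)) => t0 t0W Ht0.
rewrite (modn_small bwW) in Ht0.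
have pickP : forall u t, (t < W)%N -> ((t + W * u).+1 %% W == bw)%N = (t == t0).
  move=> u t tW; rewrite (_ : (t + W * u).+1 = u * W + (1 + 1 * t))%N; last by ring.
  rewrite modnMDl; apply/eqP/eqP => [E|->]; last by [].
  by apply: (@root_uniq W 1 1 t t0 (coprime1n W) tW t0W); rewrite E Ht0.
under eq_bigr => u _ do rewrite (@pick_sum _ W _ _ t0 t0W (pickP u)).
set al := `|((a * h) %% q%:Z)%Z|%N.
have alE : ((a * h) %% q%:Z)%Z = al%:Z by rewrite gez0_abs // modz_ge0 // eqz_nat -lt0n.
have qR : (q%:R : R) != 0 by rewrite pnatr_eq0 -lt0n.
have WR : (W%:R : R) != 0 by rewrite pnatr_eq0 -lt0n.
have key : forall u, e_ ((a * (t0 + W * u).+1%:Z * h)%:~R / (W * q)%:R : R) =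
    e_ ((a * t0.+1%:Z * h)%:~R / (W * q)%:R) * e_ ((al * u)%:R / q%:R).
  move=> u; set z := (a * h)%R.
  have zE : z = ((z %/ q%:Z)%Z * q%:Z + al%:Z)%R by rewrite {1}(divz_eq z q) alE.
  have m1 : forall X : nat, (a * X%:Z * h)%:~R = (z%:~R * X%:R : R).
    by move=> X; rewrite /z mulrAC rmorphM /= -[X%:Z%:~R]/(X%:R) ?mulrz_nat.
  rewrite !m1 zE (_ : (((z %/ q%:Z)%Z * q%:Z + al%:Z)%:~R * (t0 + W * u).+1%:R) / (W * q)%:R =
     (((z %/ q%:Z)%Z * q%:Z + al%:Z)%:~R * t0.+1%:R) / (W * q)%:R + (al * u)%:R / q%:R
      + ((z %/ q%:Z)%Z * u%:Z)%:~R :> R).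
    by rewrite !eD e_int mulr1.
  rewrite !rmorphD !rmorphM /= -!addSn !natrD !natrM.
  rewrite -[(q%:Z)%:~R]/(q%:R) -[(al%:Z)%:~R]/(al%:R) -[(u%:Z)%:~R]/(u%:R) ?mulrz_nat.
  field; by rewrite qR WR.
under eq_bigr => u _ do rewrite key mulrCA.
rewrite -mulr_sumr normrM norm_e mul1r.
have := @main R q q t0.+1 W al (leqnn q) q0; rewrite /F.
under eq_bigr => u _ do rewrite addSn.
move=> H; apply: le_trans H _.
have -> : gcdz h q = gcdz al q.
  by rewrite gcdzC -(Gauss_gcdzr h cqa) gcdzC -gcdz_modl alE.
by [].
Qed.
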